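(* Let $D\in\mathcal{R}$. Then $L^+(D)=N^+(D)$, where $L^+(D)=\{T\in\mathcal{R}: T<D,\ |T|>|D|$, and there is no $S\in\mathcal{R}$ with $T<S<D\}$.
   Context: Let $n\ge 1$ and $\Phi^+=\{(i,j)\in\mathbb{Z}^2:1\le j<i\le n\}$, with rows $\mathcal{R}_k=\{(k,s)\in\Phi^+\}$ and columns $\mathcal{C}_k=\{(r,k)\in\Phi^+\}$. A rook placement is a subset $D\subseteq\Phi^+$ with $|D\cap\mathcal{R}_k|\le1$ and $|D\cap\mathcal{C}_k|\le1$ for all $k$; $\mathcal{R}$ is the set of rook placements. For $D\in\mathcal{R}$, $R_D$ is the $n\times n$ integer matrix with $(R_D)_{i,j}=\#\{(a,b)\in D:a\ge i,\ b\le j\}$ for $i>j$ and $0$ otherwise; $D\le D'$ means $R_D\le R_{D'}$ entrywise. Order on $\Phi^+$: $(a,b)\le(c,d)$ iff $a\le c$ and $b\ge d$. For $(i,j)\in D$, $C_{(i,j)}(D)$ is the set of integer pairs $(\alpha,\beta)$ such that: $i>\beta\ge\alpha>j$; $D\cap\mathcal{R}_\alpha=\emptyset$ and $D\cap\mathcal{C}_\beta=\emptyset$; $D\cap\mathcal{R}_k\ne\emptyset$ and $D\cap\mathcal{C}_k\neq\emptyset$ for all $\alpha<k<\beta$; whenever $(p,q)\in D$, $(p,q)<(i,j)$ and $(p,q)\not<(\alpha,j)$, one has $(p,q)<(i,\beta)$; and if $\alpha\ne\beta$ then $D\cap\mathcal{R}_\beta\ne\emptyset$ and $D\cap\mathcal{C}_\alpha\ne\emptyset$.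 For $(\alpha,\beta)\in C_{(i,j)}(D)$ put $D^{\alpha,\beta}_{(i,j)}=(D\setminus\{(i,j)\})\cup\{(i,\beta),(\alpha,j)\}$, and let $N^+(D)$ be the set of all such $D^{\alpha,\beta}_{(i,j)}$ over $(i,j)\in D$ and $(\alpha,\beta)\in C_{(i,j)}(D)$. *)

(* Defs.v *)
(* Positions of Phi^+ are encoded 0-based:
   paper's (i,j) with 1 <= j < i <= n  <->  (i-1, j-1) : 'I_n * 'I_n with j < i. *)
From mathcomp Require Import all_boot.
Set Implicit Arguments. Unset Strict Implicit. Unset Printing Implicit Defensive.

Section Rooks.
Variable n : nat.
Notation pos := ('I_n * 'I_n)%type.

Definition Phi : {set pos} := [set p : pos | p.2 < p.1].

Definition rowD (D : {set pos}) (k : 'I_n) : {set pos} := [set p in D | p.1 == k].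
Definition colD (D : {set pos}) (k : 'I_n) : {set pos} := [set p in D | p.2 == k].

Definition rook (D : {set pos}) : bool :=
  [&& D \subset Phi,
      [forall k, #|rowD D k| <= 1] &
      [forall k, #|colD D k| <= 1]].

Definition rankmx (D : {set pos}) (i j : 'I_n) : nat :=
  if j < i then #|[set p in D | (i <= p.1) && (p.2 <= j)]| else 0.

Definition leR (D D' : {set pos}) : bool :=
  [forall i, forall j, rankmx D i j <= rankmx D' i j].
Definition ltR (D D' : {set pos}) : bool := leR D D' && (D != D').

Definition lePhi (x y : pos) : bool := (x.1 <= y.1) && (y.2 <= x.2).
Definition ltPhi (x y : pos) : bool := lePhi x y && (x != y).

Definition Lplus (D T : {set pos}) : Prop :=
  [/\ rook T, ltR T D, #|D| < #|T| &
      ~ exists S, [/\ rook S, ltR T S & ltR S D]].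

Definition Ccond (D : {set pos}) (i j alpha beta : 'I_n) : Prop :=
  [/\ beta < i /\ alpha <= beta /\ j < alpha,
      rowD D alpha = set0 /\ colD D beta = set0,
      (forall k : 'I_n, alpha < k < beta -> rowD D k != set0 /\ colD D k != set0),
      (forall p, p \in D -> ltPhi p (i, j) -> ~~ ltPhi p (alpha, j) -> ltPhi p (i, beta)) &
      (alpha != beta -> rowD D beta != set0 /\ colD D alpha != set0)].

Definition Dmove (D : {set pos}) (i j alpha beta : 'I_n) : {set pos} :=
  (D :\ (i, j)) :|: [set (i, beta); (alpha, j)].

Definition Nplus (D T : {set pos}) : Prop :=
  exists i j alpha beta, [/\ (i, j) \in D, Ccond D i j alpha beta &
                              T = Dmove D i j alpha beta].
End Rooks.

(* Main.v *)
Require Import Defs.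
From mathcomp Require Import all_boot zify.
From Stdlib Require Import Classical.
Set Implicit Arguments. Unset Strict Implicit. Unset Printing Implicit Defensive.


Definition cnt n (X : {set 'I_n * 'I_n}) (a b : nat) : nat :=
  #|[set p in X | (a <= p.1) && (p.2 <= b)]|.
Definition rs n (X : {set 'I_n * 'I_n}) (a b : nat) : nat :=
  #|[set p in X | (p.1 == a :> nat) && (p.2 <= b)]|.
Definition cs n (X : {set 'I_n * 'I_n}) (a b : nat) : nat :=
  #|[set p in X | (a <= p.1) && (p.2 == b :> nat)]|.
Definition box n (X : {set 'I_n * 'I_n}) (a1 a2 b1 b2 : nat) : nat :=
  #|[set p in X | (a1 <= p.1 < a2) && (b1 < p.2 <= b2)]|.

Definition rookP n (X : {set 'I_n * 'I_n}) : Prop :=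
  [/\ forall p, p \in X -> p.2 < p.1,
      forall p q, p \in X -> q \in X -> p.1 = q.1 :> nat -> p = q &
      forall p q, p \in X -> q \in X -> p.2 = q.2 :> nat -> p = q].

Definition LE n (X Y : {set 'I_n * 'I_n}) : Prop :=
  forall a b, b < a < n -> cnt X a b <= cnt Y a b.


Ltac gen_atom t := set xtmp := t;
  match goal with y := _ |- _ => clearbody y; generalize dependent y end.
Ltac revert_props :=
  repeat match goal with
  | H : is_true _ |- _ => revert H
  | H : @eq nat _ _ |- _ => revert H
  | H : ~ (@eq nat _ _) |- _ => revert H
  end.
Ltac fixatoms := revert_props;
  repeat match goal with
  | |- context [@nat_of_ord ?n (@fst ?A ?B ?p)] => gen_atom (@nat_of_ord n (@fst A B p))
  | |- context [@nat_of_ord ?n (@snd ?A ?B ?p)] => gen_atom (@nat_of_ord n (@snd A B p))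
  end;
  repeat match goal with
  | |- context [@cnt ?n ?X ?a ?b] => gen_atom (@cnt n X a b)
  | |- context [@rs ?n ?X ?a ?b] => gen_atom (@rs n X a b)
  | |- context [@cs ?n ?X ?a ?b] => gen_atom (@cs n X a b)
  | |- context [@box ?n ?X ?a ?b ?c ?d] => gen_atom (@box n X a b c d)
  end; intros.
Ltac flia := fixatoms; lia.

Lemma card_split (T : finType) (A : {set T}) (P : pred T) :
  #|A| = #|[set x in A | P x]| + #|[set x in A | ~~ P x]|.
Proof.
rewrite -(cardsID [set x | P x] A); congr (_ + _); apply: eq_card => x; rewrite !inE //.
by rewrite andbC.
Qed.

Ltac bsolve := let p := fresh "p" in
  apply: eq_card => p; rewrite !inE; case: (p \in _) => //=; apply/idP/idP => ?; lia.

Lemma cnt_row n (X : {set 'I_n * 'I_n}) a b : cnt X a b = cnt X a.+1 b + rs X a b.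
Proof.
rewrite /cnt (card_split _ (fun p : 'I_n * 'I_n => a < p.1)); congr (_ + _); bsolve.
Qed.

Lemma cnt_col n (X : {set 'I_n * 'I_n}) a b : cnt X a b.+1 = cnt X a b + cs X a b.+1.
Proof.
rewrite /cnt (card_split _ (fun p : 'I_n * 'I_n => p.2 <= b)); congr (_ + _); bsolve.
Qed.

Lemma cnt_box n (X : {set 'I_n * 'I_n}) a1 a2 b1 b2 : a1 <= a2 -> b1 <= b2 ->
  cnt X a1 b2 + cnt X a2 b1 = cnt X a2 b2 + cnt X a1 b1 + box X a1 a2 b1 b2.
Proof.
move=> h1 h2.
have E1 : cnt X a1 b2 = cnt X a2 b2 + #|[set p in X | (a1 <= p.1 < a2) && (p.2 <= b2)]|.
  rewrite /cnt (card_split _ (fun p : 'I_n * 'I_n => a2 <= p.1)); congr (_ + _); bsolve.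
have E2 : cnt X a1 b1 = cnt X a2 b1 + #|[set p in X | (a1 <= p.1 < a2) && (p.2 <= b1)]|.
  rewrite /cnt (card_split _ (fun p : 'I_n * 'I_n => a2 <= p.1)); congr (_ + _); bsolve.
have E3 : #|[set p in X | (a1 <= p.1 < a2) && (p.2 <= b2)]| =
          #|[set p in X | (a1 <= p.1 < a2) && (p.2 <= b1)]| + box X a1 a2 b1 b2.
  rewrite (card_split _ (fun p : 'I_n * 'I_n => p.2 <= b1)); congr (_ + _); bsolve.
lia.
Qed.

Lemma cnt_n n (X : {set 'I_n * 'I_n}) b : cnt X n b = 0.
Proof.
apply/eqP; rewrite cards_eq0; apply/eqP/setP => p; rewrite !inE.
apply: negbTE; apply/negP => /andP[_ /andP[H _]]; have := ltn_ord p.1; lia.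
Qed.

Lemma rookE n (X : {set 'I_n * 'I_n}) : rook X <-> rookP X.
Proof.
split.
- case/and3P => /subsetP Hs /forallP Hr /forallP Hc; split.
  + by move=> p /Hs; rewrite inE.
  + move=> p q hp hq e; have := Hr p.1; move/card_le1_eqP; apply; rewrite !inE ?hp ?hq ?eqxx //=.
    by apply/eqP/val_inj; rewrite /= -e.
  + move=> p q hp hq e; have := Hc p.2; move/card_le1_eqP; apply; rewrite !inE ?hp ?hq ?eqxx //=.
    by apply/eqP/val_inj; rewrite /= -e.
- case=> H1 H2 H3; apply/and3P; split.
  + by apply/subsetP => p hp; rewrite inE H1.
  + apply/forallP => k; apply/card_le1_eqP => p q; rewrite !inE => /andP[hp /eqP ep] /andP[hq /eqP eq].
    by apply: H2 => //; rewrite ep eq.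
  + apply/forallP => k; apply/card_le1_eqP => p q; rewrite !inE => /andP[hp /eqP ep] /andP[hq /eqP eq].
    by apply: H3 => //; rewrite ep eq.
Qed.

Lemma rs_le1 n (X : {set 'I_n * 'I_n}) a b : rookP X -> rs X a b <= 1.
Proof.
case=> _ H _; apply/card_le1_eqP => p q; rewrite !inE => /andP[hp /andP[/eqP e1 _]] /andP[hq /andP[/eqP e2 _]].
by apply: H => //; rewrite e1 e2.
Qed.

Lemma cs_le1 n (X : {set 'I_n * 'I_n}) a b : rookP X -> cs X a b <= 1.
Proof.
case=> _ _ H; apply/card_le1_eqP => p q; rewrite !inE => /andP[hp /andP[_ /eqP e1]] /andP[hq /andP[_ /eqP e2]].
by apply: H => //; rewrite e1 e2.
Qed.

Lemma leRP n (X Y : {set 'I_n * 'I_n}) : leR X Y <-> LE X Y.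
Proof.
split.
- move=> /forallP H a b /andP[hba han].
  have hbn : b < n by lia.
  have := H (Ordinal han) => /forallP /(_ (Ordinal hbn)).
  by rewrite /rankmx /= hba.
- move=> H; apply/forallP => i; apply/forallP => j; rewrite /rankmx; case: ifP => // h.
  by apply: H; rewrite h ltn_ord.
Qed.

Lemma ex_max (P : nat -> Prop) N : (exists m, P m) -> (forall m, P m -> m <= N) ->
  exists m, P m /\ forall k, P k -> k <= m.
Proof.
move=> [m0 hm0] hb.
apply: NNPP => hno.
have key : forall d, exists m, P m /\ d <= m.
  elim=> [|d IH]; first by exists m0.
  case: IH => m [hm hdm].
  have : ~ (forall k, P k -> k <= m) by move=> hk; apply: hno; exists m.
  move/not_all_ex_not => [k hk].
  case: (imply_to_and _ _ hk) => hk1 hk2.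
  exists k; split => //; lia.
have [m [hm hle]] := key N.+1; have := hb _ hm; lia.
Qed.

Lemma ex_min (P : nat -> Prop) : (exists m, P m) -> exists m, P m /\ forall k, P k -> m <= k.
Proof.
move=> [m0 hm0]; apply: NNPP => hno.
have key : forall d m, m < d -> ~ P m.
  elim=> [|d IH] m hm //.
  case: (ltngtP m d) => [h|h|->]; [exact: IH | lia | ].
  move=> hd; apply: hno; exists d; split => // k hk; apply: NNPP => hkd.
  apply: (IH k) => //; lia.
exact: (key m0.+1 m0).
Qed.


Lemma card_pred1 (T : finType) (A : {set T}) x : #|[set y in A | y == x]| = (x \in A).
Proof.
case: (boolP (x \in A)) => h.
- rewrite (_ : [set y in A | y == x] = [set x]) ?cards1 //; apply/setP => y; rewrite !inE.
  by case: eqP => [->|]; rewrite ?h ?andbF.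
- apply/eqP; rewrite cards_eq0; apply/eqP/setP => y; rewrite !inE.
  by case: eqP => [->|]; rewrite ?(negbTE h) ?andbF.
Qed.

Lemma cnt_add n (X : {set 'I_n * 'I_n}) q a b : q \notin X ->
  cnt (q |: X) a b = cnt X a b + ((a <= q.1) && (q.2 <= b)).
Proof.
move=> hq; rewrite /cnt (card_split _ (pred1 q)) card_pred1 !inE eqxx /= addnC; congr (_ + _).
apply: eq_card => p; rewrite !inE.
by case: (eqVneq p q) => [->|hne] /=; rewrite ?andbT ?andbF ?(negbTE hq).
Qed.

Lemma cnt_del n (X : {set 'I_n * 'I_n}) q a b : q \in X ->
  cnt X a b = cnt (X :\ q) a b + ((a <= q.1) && (q.2 <= b)).
Proof.
move=> hq; rewrite /cnt (card_split _ (pred1 q)) card_pred1 !inE hq /= addnC; congr (_ + _).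
apply: eq_card => p; rewrite !inE.
by case: (eqVneq p q) => [->|hne] /=; rewrite ?andbT ?andbF.
Qed.

Lemma rook_del n (X : {set 'I_n * 'I_n}) (q : 'I_n * 'I_n) : rookP X -> rookP (X :\ q).
Proof.
case=> H1 H2 H3; split.
- by move=> p; rewrite inE => /andP[_ /H1].
- by move=> p r; rewrite !inE => /andP[_ hp] /andP[_ hr]; apply: H2.
- by move=> p r; rewrite !inE => /andP[_ hp] /andP[_ hr]; apply: H3.
Qed.

Lemma rook_add n (X : {set 'I_n * 'I_n}) (q : 'I_n * 'I_n) : rookP X -> q.2 < q.1 ->
  (forall p, p \in X -> p.1 <> q.1 :> nat /\ p.2 <> q.2 :> nat) ->
  rookP (q |: X) /\ q \notin X.
Proof.
case=> H1 H2 H3 hq H; split; last first.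
  by apply/negP => /H [].
split.
- by move=> p; rewrite !inE => /orP[/eqP ->|/H1].
- move=> p r; rewrite !inE => /orP[/eqP ->|hp] /orP[/eqP ->|hr] // e.
  + by case: (H r hr); rewrite e.
  + by case: (H p hp); rewrite e.
  + exact: H2.
- move=> p r; rewrite !inE => /orP[/eqP ->|hp] /orP[/eqP ->|hr] // e.
  + by case: (H r hr); rewrite e.
  + by case: (H p hp); rewrite e.
  + exact: H3.
Qed.

Definition rowE n (D : {set 'I_n * 'I_n}) (x : nat) := forall p, p \in D -> p.1 <> x :> nat.
Definition colE n (D : {set 'I_n * 'I_n}) (y : nat) := forall p, p \in D -> p.2 <> y :> nat.

Lemma rowD0 n (D : {set 'I_n * 'I_n}) (x : 'I_n) : rowD D x = set0 <-> rowE D x.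
Proof.
split.
- move=> H p hp e; have : p \in rowD D x by rewrite !inE hp /=; apply/eqP/val_inj.
  by rewrite H inE.
- move=> H; apply/setP => p; rewrite !inE; apply/negbTE; apply/negP => /andP[hp /eqP e].
  by apply: (H p hp); rewrite e.
Qed.

Lemma colD0 n (D : {set 'I_n * 'I_n}) (x : 'I_n) : colD D x = set0 <-> colE D x.
Proof.
split.
- move=> H p hp e; have : p \in colD D x by rewrite !inE hp /=; apply/eqP/val_inj.
  by rewrite H inE.
- move=> H; apply/setP => p; rewrite !inE; apply/negbTE; apply/negP => /andP[hp /eqP e].
  by apply: (H p hp); rewrite e.
Qed.

Lemma del_facts n (D : {set 'I_n * 'I_n}) (i j : 'I_n) : rookP D -> (i, j) \in D ->
  [/\ rookP (D :\ (i, j)),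
      forall p, p \in D :\ (i, j) -> p.1 <> i :> nat,
      forall p, p \in D :\ (i, j) -> p.2 <> j :> nat &
      forall p, p \in D :\ (i, j) -> p \in D].
Proof.
move=> hD hij; have hD' := hD; case: hD' => H1 H2 H3; split.
- exact: rook_del.
- move=> p; rewrite !inE => /andP[hne hp] e; have := H2 _ _ hp hij e; by move/eqP: hne.
- move=> p; rewrite !inE => /andP[hne hp] e; have := H3 _ _ hp hij e; by move/eqP: hne.
- by move=> p; rewrite !inE => /andP[].
Qed.

Definition region (x y i j a b : nat) : bool := (x < a <= i) && (j <= b < y).

Lemma mv0_spec n (D : {set 'I_n * 'I_n}) (i j : 'I_n) : rookP D -> (i, j) \in D ->
  [/\ rookP (D :\ (i, j)), #|D :\ (i, j)| <= #|D| &
      forall a b, b < a -> cnt D a b = cnt (D :\ (i, j)) a b + region j i i j a b].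
Proof.
move=> hD hij; case: (del_facts hD hij) => R0 _ _ _; split => //.
- by rewrite [in X in _ <= X](cardsD1 (i, j) D) hij leq_addl.
- move=> a b hab; rewrite (cnt_del a b hij) /region /=; set c := cnt (D :\ (i, j)) a b; lia.
Qed.

Lemma mv1_spec n (D : {set 'I_n * 'I_n}) (i j x : 'I_n) : rookP D -> (i, j) \in D ->
  j < x -> x < i -> rowE D x ->
  [/\ rookP ((x, j) |: (D :\ (i, j))), #|(x, j) |: (D :\ (i, j))| <= #|D| &
      forall a b, b < a -> cnt D a b = cnt ((x, j) |: (D :\ (i, j))) a b + region x i i j a b].
Proof.
move=> hD hij hjx hxi hx; case: (del_facts hD hij) => R0 Hr Hc Hin.
have [R1 N1] : rookP ((x, j) |: (D :\ (i, j))) /\ (x, j) \notin D :\ (i, j).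
  apply: rook_add => // p hp; split; [exact: hx (Hin _ hp) | exact: Hc].
split => //.
- by have := cardsD1 (i, j) D; rewrite cardsU1 N1 hij /= => ->; rewrite leqnn.
- move=> a b hab; rewrite (cnt_del a b hij) (cnt_add a b N1) /region /=; set c := cnt (D :\ (i, j)) a b; lia.
Qed.

Lemma mv2_spec n (D : {set 'I_n * 'I_n}) (i j y : 'I_n) : rookP D -> (i, j) \in D ->
  j < y -> y < i -> colE D y ->
  [/\ rookP ((i, y) |: (D :\ (i, j))), #|(i, y) |: (D :\ (i, j))| <= #|D| &
      forall a b, b < a -> cnt D a b = cnt ((i, y) |: (D :\ (i, j))) a b + region j y i j a b].
Proof.
move=> hD hij hjy hyi hy; case: (del_facts hD hij) => R0 Hr Hc Hin.
have [R1 N1] : rookP ((i, y) |: (D :\ (i, j))) /\ (i, y) \notin D :\ (i, j).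
  apply: rook_add => // p hp; split; [exact: Hr | exact: hy (Hin _ hp)].
split => //.
- by have := cardsD1 (i, j) D; rewrite cardsU1 N1 hij /= => ->; rewrite leqnn.
- move=> a b hab; rewrite (cnt_del a b hij) (cnt_add a b N1) /region /=; set c := cnt (D :\ (i, j)) a b; lia.
Qed.

Lemma Dmove_eq n (D : {set 'I_n * 'I_n}) (i j x y : 'I_n) :
  Dmove D i j x y = (i, y) |: ((x, j) |: (D :\ (i, j))).
Proof.
apply/setP => p; rewrite /Dmove !inE.
by case: (p == (i, y)); case: (p == (x, j)); rewrite ?orbT ?orbF.
Qed.

Lemma mv3_spec n (D : {set 'I_n * 'I_n}) (i j x y : 'I_n) : rookP D -> (i, j) \in D ->
  j < x -> x <= y -> y < i -> rowE D x -> colE D y ->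
  [/\ rookP (Dmove D i j x y), #|Dmove D i j x y| = #|D|.+1 &
      forall a b, b < a -> cnt D a b = cnt (Dmove D i j x y) a b + region x y i j a b].
Proof.
move=> hD hij hjx hxy hyi hx hy; rewrite Dmove_eq; case: (del_facts hD hij) => R0 Hr Hc Hin.
have [R1 N1] : rookP ((x, j) |: (D :\ (i, j))) /\ (x, j) \notin D :\ (i, j).
  apply: rook_add => // p hp; split; [exact: hx (Hin _ hp) | exact: Hc].
have [R2 N2] : rookP ((i, y) |: ((x, j) |: (D :\ (i, j)))) /\ (i, y) \notin (x, j) |: (D :\ (i, j)).
  apply: rook_add => //=; try lia.
  move=> p; rewrite in_setU1 => /orP[/eqP -> /=|hp]; first lia.
  split; [exact: Hr | exact: hy (Hin _ hp)].
split => //.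
- by have := cardsD1 (i, j) D; rewrite cardsU1 N2 cardsU1 N1 hij /= => ->.
- move=> a b hab; rewrite (cnt_del a b hij) (cnt_add a b N2) (cnt_add a b N1) /region /=; set c := cnt (D :\ (i, j)) a b; lia.
Qed.

Definition swapm n (D : {set 'I_n * 'I_n}) (i j k l : 'I_n) :=
  (i, l) |: ((k, j) |: ((D :\ (i, j)) :\ (k, l))).

Lemma mv4_spec n (D : {set 'I_n * 'I_n}) (i j k l : 'I_n) : rookP D -> (i, j) \in D ->
  (k, l) \in D -> j < l -> l < k -> k < i ->
  [/\ rookP (swapm D i j k l), #|swapm D i j k l| = #|D| &
      forall a b, b < a -> cnt D a b = cnt (swapm D i j k l) a b + region k l i j a b].
Proof.
move=> hD hij hkl hjl hlk hki; rewrite /swapm; case: (del_facts hD hij) => R0 Hr Hc Hin.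
have hD' := hD; case: hD' => H1 H2 H3.
have hkl' : (k, l) \in D :\ (i, j).
  rewrite !inE hkl andbT; apply/negP => /eqP [e1 _]; move: hki; rewrite e1; lia.
set D0 := (D :\ (i, j)) :\ (k, l).
have R0' : rookP D0 by exact: rook_del.
have Hin0 : forall p, p \in D0 -> p \in D :\ (i, j) /\ p != (k, l).
  by move=> p; rewrite /D0 !inE => /andP[-> ->].
have [R1 N1] : rookP ((k, j) |: D0) /\ (k, j) \notin D0.
  apply: rook_add => //=; try lia.
  move=> p /Hin0 [hp hne]; split; last exact: Hc.
  move=> e; have := H2 _ _ (Hin _ hp) hkl e; by move/eqP: hne.
have [R2 N2] : rookP ((i, l) |: ((k, j) |: D0)) /\ (i, l) \notin (k, j) |: D0.
  apply: rook_add => //=; try lia.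
  move=> p; rewrite in_setU1 => /orP[/eqP -> /=|/Hin0 [hp hne]]; first lia.
  split; first exact: Hr.
  move=> e; have := H3 _ _ (Hin _ hp) hkl e; by move/eqP: hne.
split => //.
- have := cardsD1 (i, j) D; have := cardsD1 (k, l) (D :\ (i, j)).
  rewrite cardsU1 N2 cardsU1 N1 hij hkl' -/D0 /= => -> ->; reflexivity.
- move=> a b hab.
  rewrite (cnt_del a b hij) (cnt_del a b hkl') -/D0 (cnt_add a b N2) (cnt_add a b N1) /region /=; set c := cnt D0 a b; lia.
Qed.


Lemma pair_eqn n (p q : 'I_n * 'I_n) : (q == p) = ((q.1 == p.1 :> nat) && (q.2 == p.2 :> nat)).
Proof. by case: p q => [p1 p2] [q1 q2]; rewrite xpair_eqE. Qed.

Lemma pt_box n (Y : {set 'I_n * 'I_n}) (p : 'I_n * 'I_n) : 0 < p.2 ->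
  box Y p.1 p.1.+1 p.2.-1 p.2 = (p \in Y).
Proof.
move=> h; rewrite /box -card_pred1; apply: eq_card => q; rewrite !inE pair_eqn.
case: (q \in Y) => //=; apply/idP/idP => ?; lia.
Qed.

Lemma pt_rs n (Y : {set 'I_n * 'I_n}) (p : 'I_n * 'I_n) : p.2 = 0 :> nat ->
  rs Y p.1 0 = (p \in Y).
Proof.
move=> h; rewrite /rs -card_pred1; apply: eq_card => q; rewrite !inE pair_eqn.
case: (q \in Y) => //=; apply/idP/idP => ?; lia.
Qed.

Lemma cnt_eq_set n (X D : {set 'I_n * 'I_n}) : rookP X -> rookP D ->
  (forall a b, b < a < n -> cnt X a b = cnt D a b) -> X = D.
Proof.
move=> [HX _ _] [HD _ _] H.
have H' : forall a b, b < a <= n -> cnt X a b = cnt D a b.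
  move=> a b /andP[hba han]; case: (ltngtP a n) => [hlt|hgt|->].
  - by apply: H; rewrite hba hlt.
  - lia.
  - by rewrite !cnt_n.
apply/setP => p.
case: (boolP (p.2 < p.1)) => hp; last first.
  by apply/idP/idP => /[dup] h; [move/HX: h | move/HD: h]; move: hp => /negP.
have hpn := ltn_ord p.1.
suff E : nat_of_bool (p \in X) = nat_of_bool (p \in D).
  by move: E; case: (p \in X); case: (p \in D).
case: (posnP p.2) => h0.
- rewrite -!(pt_rs _ h0).
  have e1 := cnt_row X p.1 0; have e2 := cnt_row D p.1 0.
  have g1 := H' p.1 0 ltac:(lia); have g2 := H' p.1.+1 0 ltac:(lia).
  set a := nat_of_ord p.1 in e1 e2 g1 g2 *; lia.
- rewrite -!(pt_box _ h0).
  have e1 := cnt_box X (leqnSn p.1) (leq_pred p.2).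
  have e2 := cnt_box D (leqnSn p.1) (leq_pred p.2).
  have g1 := H' p.1 p.2 ltac:(lia); have g2 := H' p.1.+1 p.2.-1 ltac:(lia).
  have g3 := H' p.1.+1 p.2 ltac:(lia); have g4 := H' p.1 p.2.-1 ltac:(lia).
  set a := nat_of_ord p.1 in e1 e2 g1 g2 g3 g4 *; set b := nat_of_ord p.2 in e1 e2 g1 g2 g3 g4 *; lia.
Qed.

Lemma rs_mono n (X : {set 'I_n * 'I_n}) a b b' : b <= b' -> rs X a b <= rs X a b'.
Proof.
move=> h; apply: subset_leq_card; apply/subsetP => q; rewrite !inE.
case/andP => -> /andP[-> ?] /=; flia.
Qed.

Lemma exists_rook n (X D : {set 'I_n * 'I_n}) : rookP X -> rookP D -> LE X D -> X != D ->
  exists p, p \in D /\ cnt X p.1 p.2 < cnt D p.1 p.2.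
Proof.
move=> hX hD hle hne.
have [a0 [Ha0 Hmax]] : exists a, (exists b, b < a < n /\ cnt X a b < cnt D a b) /\
    forall a', (exists b, b < a' < n /\ cnt X a' b < cnt D a' b) -> a' <= a.
  apply: (@ex_max _ n).
  - apply: NNPP => hno; move/negP: hne; apply; apply/eqP; apply: cnt_eq_set => // a b hab.
    have := hle a b hab; case: (ltngtP (cnt X a b) (cnt D a b)) => // h _.
    by exfalso; apply: hno; exists a, b.
  - by move=> m [b [h _]]; lia.
case: Ha0 => b0 [hb0 hlt0].
have Hnext : forall b, b < a0.+1 -> cnt X a0.+1 b = cnt D a0.+1 b.
  move=> b hb; case: (ltngtP a0.+1 n) => [hl|hg|->]; last by rewrite !cnt_n.
  - have := hle a0.+1 b ltac:(lia).
    case: (ltngtP (cnt X a0.+1 b) (cnt D a0.+1 b)) => // h _.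
    have : a0.+1 <= a0 by apply: Hmax; exists b; split => //; lia.
    lia.
  - lia.
have e1 := cnt_row X a0 b0; have e2 := cnt_row D a0 b0.
have f := Hnext b0 ltac:(lia).
have rD := rs_le1 a0 b0 hD.
have rX0 : rs X a0 b0 = 0 by lia.
have : 0 < rs D a0 b0 by lia.
case/card_gt0P => q; rewrite !inE => /andP[hq /andP[/eqP eq1 hq2]].
exists q; split => //.
have hq21 : q.2 < q.1 by case: hD => H1 _ _; exact: H1.
have e3 := cnt_row X a0 q.2; have e4 := cnt_row D a0 q.2.
have f2 := Hnext q.2 ltac:(lia).
have m1 := rs_mono X a0 hq2.
have : 0 < rs D a0 q.2.
  apply/card_gt0P; exists q; rewrite !inE hq eq1 eqxx leqnn //.
rewrite eq1; lia.
Qed.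

Lemma LE_trans n (X Y Z : {set 'I_n * 'I_n}) : LE X Y -> LE Y Z -> LE X Z.
Proof. move=> h1 h2 a b h; have := h1 a b h; have := h2 a b h; lia. Qed.

Lemma LE_antisym n (X Y : {set 'I_n * 'I_n}) : rookP X -> rookP Y -> LE X Y -> LE Y X -> X = Y.
Proof.
move=> hX hY h1 h2; apply: cnt_eq_set => // a b h; have := h1 a b h; have := h2 a b h; lia.
Qed.

Lemma region_lt n (D M : {set 'I_n * 'I_n}) (i j : 'I_n) x y :
  (forall a b, b < a -> cnt D a b = cnt M a b + region x y i j a b) ->
  x < i -> j < y -> j < i -> LE M D /\ M != D.
Proof.
move=> H hx hy hji; split.
- by move=> a b /andP[hab _]; rewrite (H a b hab); lia.
- apply/eqP => e; have := H i j hji; rewrite e /region; lia.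
Qed.


Definition L3 n (D T : {set 'I_n * 'I_n}) (i j : 'I_n) : Prop :=
  exists x y : 'I_n, [/\ j < x <= y, y < i, rowE D x, colE D y & LE T (Dmove D i j x y)].

Definition Lother n (D T : {set 'I_n * 'I_n}) (i j : 'I_n) : Prop :=
  exists (M : {set 'I_n * 'I_n}) (x y : nat), [/\ rookP M, #|M| <= #|D|, LE T M,
    (forall a b, b < a -> cnt D a b = cnt M a b + region x y i j a b) &
    [/\ j <= x, x < i, j < y, y <= i &
        (x = j \/ y = i \/ exists k l : 'I_n, [/\ (k, l) \in D, val k = x, val l = y & [&& j < l, l < k & k < i]])]].

Lemma LE_of_region n (D M T : {set 'I_n * 'I_n}) (i j : 'I_n) x y :
  LE T D -> (forall a b, b < a -> cnt D a b = cnt M a b + region x y i j a b) ->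
  (forall a b, b < a -> x < a <= i -> j <= b < y -> cnt T a b < cnt D a b) -> LE T M.
Proof.
move=> hle heq hz a b h; have hab : b < a by case/andP: h.
have e := heq a b hab; have l := hle a b h; rewrite /region in e.
case: (boolP ((x < a <= i) && (j <= b < y))) => hr.
- have := hz a b hab; case/andP: hr => h1 h2; move=> /(_ h1 h2); flia.
- rewrite (negbTE hr) in e; flia.
Qed.

Lemma swap_out n (D T : {set 'I_n * 'I_n}) (i j k l : 'I_n) : rookP D -> LE T D ->
  (i, j) \in D -> (k, l) \in D -> j < l -> l < k -> k < i ->
  (forall a b, b < a -> k < a <= i -> j <= b < l -> cnt T a b < cnt D a b) -> Lother D T i j.
Proof.
move=> hD hle hij hkl h1 h2 h3 hz; case: (mv4_spec hD hij hkl h1 h2 h3) => R C E.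
exists (swapm D i j k l), (nat_of_ord k), (nat_of_ord l); split => //.
- by rewrite C.
- exact: LE_of_region hle E hz.
- split; try lia; right; right; exists k, l; split => //; lia.
Qed.

Lemma mv0_out n (D T : {set 'I_n * 'I_n}) (i j : 'I_n) : rookP D -> LE T D ->
  (i, j) \in D -> j < i ->
  (forall a b, b < a -> j < a <= i -> j <= b < i -> cnt T a b < cnt D a b) -> Lother D T i j.
Proof.
move=> hD hle hij hji hz; case: (mv0_spec hD hij) => R C E.
exists (D :\ (i, j)), (nat_of_ord j), (nat_of_ord i); split => //.
- exact: LE_of_region hle E hz.
- by split; try lia; left.
Qed.

Lemma mv1_out n (D T : {set 'I_n * 'I_n}) (i j x : 'I_n) : rookP D -> LE T D ->
  (i, j) \in D -> j < x -> x < i -> rowE D x ->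
  (forall a b, b < a -> x < a <= i -> j <= b < i -> cnt T a b < cnt D a b) -> Lother D T i j.
Proof.
move=> hD hle hij h1 h2 hx hz; case: (mv1_spec hD hij h1 h2 hx) => R C E.
exists ((x, j) |: (D :\ (i, j))), (nat_of_ord x), (nat_of_ord i); split => //.
- exact: LE_of_region hle E hz.
- by split; try lia; right; left.
Qed.

Lemma mv2_out n (D T : {set 'I_n * 'I_n}) (i j y : 'I_n) : rookP D -> LE T D ->
  (i, j) \in D -> j < y -> y < i -> colE D y ->
  (forall a b, b < a -> j < a <= i -> j <= b < y -> cnt T a b < cnt D a b) -> Lother D T i j.
Proof.
move=> hD hle hij h1 h2 hy hz; case: (mv2_spec hD hij h1 h2 hy) => R C E.
exists ((i, y) |: (D :\ (i, j))), (nat_of_ord j), (nat_of_ord y); split => //.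
- exact: LE_of_region hle E hz.
- by split; try lia; left.
Qed.

Lemma mv3_out n (D T : {set 'I_n * 'I_n}) (i j x y : 'I_n) : rookP D -> LE T D ->
  (i, j) \in D -> j < x -> x <= y -> y < i -> rowE D x -> colE D y ->
  (forall a b, b < a -> x < a <= i -> j <= b < y -> cnt T a b < cnt D a b) -> L3 D T i j.
Proof.
move=> hD hle hij h1 h2 h3 hx hy hz; case: (mv3_spec hD hij h1 h2 h3 hx hy) => R C E.
exists x, y; split => //; [by rewrite h1 h2 | exact: LE_of_region hle E hz].
Qed.


Lemma lift n (D T : {set 'I_n * 'I_n}) (i j : 'I_n) :
  rookP D -> rookP T -> LE T D -> (i, j) \in D -> cnt T i j < cnt D i j ->
  L3 D T i j \/ Lother D T i j.
Proof.
move=> hD hT hle hij hlt.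
have hD' := hD; case: hD' => HD1 HD2 HD3.
have hji : j < i by exact: (HD1 _ hij).
have hin : i < n := ltn_ord i.
pose Z a b := [/\ b < a, a <= i, j <= b & cnt D a b = cnt T a b].
have nz : forall a b, b < a -> a <= i -> j <= b -> ~ Z a b -> cnt T a b < cnt D a b.
  move=> a b h1 h2 h3 hn; have l := hle a b ltac:(lia).
  case: (ltnP (cnt T a b) (cnt D a b)) => // h; exfalso; apply: hn; split => //; lia.
destruct (classic (exists a b, Z a b)) as [HZ|HZ]; last first.
  right; apply: mv0_out => // a b hab /andP[h1 h2] /andP[h3 h4].
  apply: nz => //; try lia; move=> hz; apply: HZ; by exists a, b.
destruct (classic (exists b, Z i b)) as [Hri|Hri]; last first.
  have [z1 [[z2 Hz] Hmax]] : exists a, (exists b, Z a b) /\ forall a', (exists b, Z a' b) -> a' <= a.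
    by apply: (@ex_max _ i HZ) => m [b [_ h _ _]].
  case: Hz => hz21 hz1i hjz2 hzeq.
  have hz1 : z1 < i.
    case: (ltngtP z1 i) => // e; [lia | exfalso; apply: Hri; exists z2; rewrite -e; split => //].
  have hnext : cnt T z1.+1 z2 < cnt D z1.+1 z2.
    apply: nz => //; try lia; move=> hz; have := Hmax _ (ex_intro _ z2 hz); lia.
  have e1 := cnt_row D z1 z2; have e2 := cnt_row T z1 z2; have r1 := rs_le1 z1 z2 hT.
  have rD0 : rs D z1 z2 = 0 by flia.
  have hz1n : z1 < n by lia.
  right.
  destruct (classic (exists p, p \in D /\ p.1 = z1 :> nat)) as [[[k l] [hp hp1]]|hnone].
  - simpl in hp1.
    have hp2 : z2 < l.
      rewrite ltnNge; apply/negP => h.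
      have : 0 < rs D z1 z2 by apply/card_gt0P; exists (k, l); rewrite !inE hp hp1 eqxx h.
      lia.
    have hp21 : l < k by exact: (HD1 _ hp).
    apply: (@swap_out _ _ _ _ _ k l) => //; try lia.
    move=> a b hab /andP[h1 h2] /andP[h3 h4]; apply: nz => //; try lia.
    move=> hz; have := Hmax _ (ex_intro _ b hz); lia.
  - pose xo := Ordinal hz1n.
    apply: (@mv1_out _ _ _ _ _ xo) => //=; try lia.
    + by move=> p hp e; apply: hnone; exists p.
    + move=> a b hab /andP[h1 h2] /andP[h3 h4]; apply: nz => //; try lia.
      move=> hz; have := Hmax _ (ex_intro _ b hz); lia.
destruct (classic (exists a, Z a j)) as [Hcj|Hcj]; last first.
  have [z2 [[z1 Hz] Hmin]] : exists b, (exists a, Z a b) /\ forall b', (exists a, Z a b') -> b <= b'.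
    by apply: ex_min; case: HZ => a [b h]; exists b, a.
  case: Hz => hz21 hz1i hjz2 hzeq.
  have hz2 : j < z2.
    case: (ltngtP j z2) => // e; [lia | exfalso; apply: Hcj; exists z1; rewrite e; split => //].
  have hprev : cnt T z1 z2.-1 < cnt D z1 z2.-1.
    apply: nz => //; try lia; move=> hz; have := Hmin _ (ex_intro _ z1 hz); lia.
  have e1 := cnt_col D z1 z2.-1; have e2 := cnt_col T z1 z2.-1.
  rewrite prednK in e1 e2; try lia.
  have r1 := cs_le1 z1 z2 hT.
  have cD0 : cs D z1 z2 = 0 by flia.
  have hz2n : z2 < n by lia.
  right.
  destruct (classic (exists p, p \in D /\ p.2 = z2 :> nat)) as [[[k l] [hp hp2]]|hnone].
  - simpl in hp2.
    have hp1 : k < z1.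
      rewrite ltnNge; apply/negP => h.
      have : 0 < cs D z1 z2 by apply/card_gt0P; exists (k, l); rewrite !inE hp hp2 eqxx h.
      lia.
    have hp21 : l < k by exact: (HD1 _ hp).
    apply: (@swap_out _ _ _ _ _ k l) => //; try lia.
    move=> a b hab /andP[h1 h2] /andP[h3 h4]; apply: nz => //; try lia.
    move=> hz; have := Hmin _ (ex_intro _ a hz); lia.
  - pose yo := Ordinal hz2n.
    apply: (@mv2_out _ _ _ _ _ yo) => //=; try lia.
    + by move=> p hp e; apply: hnone; exists p.
    + move=> a b hab /andP[h1 h2] /andP[h3 h4]; apply: nz => //; try lia.
      move=> hz; have := Hmin _ (ex_intro _ a hz); lia.
have [b0 [Hb0 Hb0min]] : exists b, Z i b /\ forall b', Z i b' -> b <= b' by exact: ex_min.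
case: (Hb0) => hb0i _ hjb0' hb0eq.
have hjb0 : j < b0.
  case: (ltngtP j b0) => // e; [lia | move: hlt; rewrite e hb0eq; lia].
have [x1 [[w [hw Hzw]] Hx1max]] : exists a, (exists b, b < b0 /\ Z a b) /\
    forall a', (exists b, b < b0 /\ Z a' b) -> a' <= a.
  apply: (@ex_max _ i).
  - by case: Hcj => a ha; exists a, j.
  - by move=> m [b [_ [_ h _ _]]].
case: Hzw => hwx1 hx1i hjw hweq.
have hx1 : x1 < i.
  case: (ltngtP x1 i) => // e; [lia | ].
  have : b0 <= w by apply: Hb0min; rewrite -e; split.
  lia.
have G : forall a b, b < a -> x1 < a <= i -> j <= b < b0 -> cnt T a b < cnt D a b.
  move=> a b hab /andP[h1 h2] /andP[h3 h4]; apply: nz => //; try lia.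
  move=> hz; have : a <= x1 by apply: Hx1max; exists b.
  lia.
have e1 := cnt_row D x1 w; have e2 := cnt_row T x1 w; have r1 := rs_le1 x1 w hT.
have g1 := G x1.+1 w ltac:(lia) ltac:(lia) ltac:(lia).
have rD0 : rs D x1 w = 0 by flia.
have e3 := cnt_col D i b0.-1; have e4 := cnt_col T i b0.-1.
rewrite prednK in e3 e4; try lia.
have r2 := cs_le1 i b0 hT.
have g2 := G i b0.-1 ltac:(lia) ltac:(lia) ltac:(lia).
have cD0 : cs D i b0 = 0 by flia.
have hx1n : x1 < n by lia.
have hb0n : b0 < n by lia.
case: (ltnP b0 x1) => hbx.
-
  right.
  have bD := cnt_box D (ltnW hx1) (ltnW hw); have bT := cnt_box T (ltnW hx1) (ltnW hw).
  have l1 := hle x1 b0 ltac:(lia).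
  have g3 := G i w ltac:(lia) ltac:(lia) ltac:(lia).
  have : 0 < box D x1 i w b0 by flia.
  case/card_gt0P => -[k l]; rewrite !inE /= => /andP[hp /andP[/andP[hk1 hk2] /andP[hl1 hl2]]].
  have hp21 : l < k by exact: (HD1 _ hp).
  apply: (@swap_out _ _ _ _ _ k l) => //; try lia.
  move=> a b hab /andP[h1 h2] /andP[h3 h4]; apply: G => //; lia.
- destruct (classic (exists p, p \in D /\ p.1 = x1 :> nat)) as [[[k l] [hp hp1]]|hnone1].
    simpl in hp1; right.
    have hp2 : w < l.
      rewrite ltnNge; apply/negP => h.
      have : 0 < rs D x1 w by apply/card_gt0P; exists (k, l); rewrite !inE hp hp1 eqxx h.
      lia.
    have hp21 : l < k by exact: (HD1 _ hp).
    apply: (@swap_out _ _ _ _ _ k l) => //; try lia.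
    move=> a b hab /andP[h1 h2] /andP[h3 h4]; apply: G => //; lia.
  destruct (classic (exists p, p \in D /\ p.2 = b0 :> nat)) as [[[k l] [hp hp2]]|hnone2].
    simpl in hp2; right.
    have hp1 : k < i.
      rewrite ltnNge; apply/negP => h.
      have : 0 < cs D i b0 by apply/card_gt0P; exists (k, l); rewrite !inE hp hp2 eqxx h.
      lia.
    have hp21 : l < k by exact: (HD1 _ hp).
    apply: (@swap_out _ _ _ _ _ k l) => //; try lia.
    move=> a b hab /andP[h1 h2] /andP[h3 h4]; apply: G => //; lia.
  left.
  pose xo := Ordinal hx1n; pose yo := Ordinal hb0n.
  apply: (@mv3_out _ _ _ _ _ xo yo) => //=; try lia.
  + by move=> p hp e; apply: hnone1; exists p.
  + by move=> p hp e; apply: hnone2; exists p.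
Qed.


Lemma ltR_of n (X Y : {set 'I_n * 'I_n}) : LE X Y -> X != Y -> ltR X Y.
Proof. by move=> h1 h2; rewrite /ltR h2 andbT; apply/leRP. Qed.

Lemma ltR_inv n (X Y : {set 'I_n * 'I_n}) : ltR X Y -> LE X Y /\ X != Y.
Proof. by case/andP => /leRP. Qed.

Lemma reg_le n (D T S M : {set 'I_n * 'I_n}) (i j : 'I_n) x y x' y' :
  LE T S -> LE S M -> (forall a b, b < a -> cnt D a b = cnt T a b + region x y i j a b) ->
  (forall a b, b < a -> cnt D a b = cnt M a b + region x' y' i j a b) ->
  forall a b, b < a < n -> region x' y' i j a b <= region x y i j a b.
Proof.
move=> h1 h2 e1 e2 a b h; have hab : b < a by case/andP: h.
have := h1 a b h; have := h2 a b h; have := e1 a b hab; have := e2 a b hab; flia.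
Qed.

Lemma between_contra n (D T S : {set 'I_n * 'I_n}) (i j : 'I_n) x y x' y' a0 b0 :
  ~ (exists S, [/\ rook S, ltR T S & ltR S D]) -> rookP S ->
  (forall a b, b < a -> cnt D a b = cnt T a b + region x y i j a b) ->
  (forall a b, b < a -> cnt D a b = cnt S a b + region x' y' i j a b) ->
  x <= x' -> y' <= y -> x' < i -> j < y' -> j < i ->
  b0 < a0 -> region x y i j a0 b0 -> ~~ region x' y' i j a0 b0 -> False.
Proof.
move=> hno hS eT eS h1 h2 h3 h4 hji hab r1 r2; apply: hno; exists S; split.
- by apply/rookE.
- apply: ltR_of.
  + move=> a b /andP[hb _]; have := eT a b hb; have := eS a b hb; rewrite /region; flia.
  + apply/eqP => e; have := eT a0 b0 hab; have := eS a0 b0 hab; rewrite -e (negbTE r2) r1; lia.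
- case: (region_lt eS h3 h4 hji) => hl hne; exact: ltR_of.
Qed.

Lemma rect_only n (D : {set 'I_n * 'I_n}) (i j x y : 'I_n) :
  (forall p, p \in D -> ltPhi p (i, j) -> ~~ ltPhi p (x, j) -> ltPhi p (i, y)) ->
  forall k l : 'I_n, (k, l) \in D -> x < k <= i -> j <= l < y -> (k, l) = (i, j).
Proof.
move=> C4 k l hp /andP[h1 h2] /andP[h3 h4]; apply/eqP; apply: contraT => hne.
have H1 : ltPhi (k, l) (i, j) by rewrite /ltPhi /lePhi /= h2 h3 hne.
have H2 : ~~ ltPhi (k, l) (x, j) by rewrite /ltPhi /lePhi /= leqNgt h1.
have := C4 _ hp H1 H2; rewrite /ltPhi /lePhi /= => /andP[/andP[_ h5] _]; lia.
Qed.

Lemma pairE n (k l i j : 'I_n) : ((k, l) == (i, j)) = (nat_of_ord k == i) && (nat_of_ord l == j).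
Proof. by []. Qed.

Lemma dir1 n (D T : {set 'I_n * 'I_n}) : rookP D -> Lplus D T -> Nplus D T.
Proof.
move=> hD [/rookE hT /ltR_inv [hle hne] hcard hno].
have hD' := hD; case: hD' => HD1 HD2 HD3.
have [[i j] [hij hlt]] := exists_rook hT hD hle hne; simpl in hlt.
have hji : j < i by exact: (HD1 _ hij).
case: (lift hD hT hle hij hlt) => [[x [y [/andP[hjx hxy] hyi hx hy hleM]]]|[M [x [y [RM CM LM EM [h1 h2 h3 h4 _]]]]]].
- case: (mv3_spec hD hij hjx hxy hyi hx hy) => R3 C3 E3.
  have eqT : T = Dmove D i j x y.
    apply: NNPP => hne'; apply: hno; exists (Dmove D i j x y); split.
    + by apply/rookE.
    + by apply: ltR_of => //; apply/eqP.
    + have [hl hn] := region_lt E3 ltac:(lia) ltac:(lia) hji; exact: ltR_of.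
  rewrite -eqT in E3.
  exists i, j, x, y; split => //; split.
  + by split => //; split.
  + by split; [apply/rowD0 | apply/colD0].
  + move=> k /andP[hk1 hk2]; split; apply/negP => /eqP.
    * move/rowD0 => hk.
      case: (mv3_spec hD hij (ltn_trans hjx hk1) (ltnW hk2) hyi hk hy) => RS _ ES.
      apply: (between_contra hno RS E3 ES (a0 := k) (b0 := j)); rewrite /region; lia.
    * move/colD0 => hk.
      case: (mv3_spec hD hij hjx (ltnW hk1) (ltn_trans hk2 hyi) hx hk) => RS _ ES.
      apply: (between_contra hno RS E3 ES (a0 := i) (b0 := k)); rewrite /region; lia.
  + move=> [k l] hp H1 H2.
    case: (boolP (ltPhi (k, l) (i, y))) => // H3; exfalso.
    have nx : (k : nat) != x by apply/eqP; exact: hx _ hp.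
    have ny : (l : nat) != y by apply/eqP; exact: hy _ hp.
    move: H1 H2 H3; rewrite /ltPhi /lePhi !pairE /= => H1 H2 H3.
    have hxk : x < k by lia.
    have hly : l < y by lia.
    have hk : k < i.
      case: (ltngtP k i) => // e; [lia | ].
      have := HD2 _ _ hp hij e; case => _ e2; move: H1; rewrite e e2; lia.
    have hl : j < l.
      case: (ltngtP j l) => // e; [lia | ].
      have := HD3 _ _ hp hij (esym e); case => e2 _; move: H1; rewrite e e2; lia.
    have hlk : l < k by exact: (HD1 _ hp).
    case: (mv4_spec hD hij hp hl hlk hk) => RS _ ES.
    apply: (between_contra hno RS E3 ES (a0 := k) (b0 := j)); rewrite /region; lia.
  + move=> hxy'; split; apply/negP => /eqP.
    * move/rowD0 => hk.
      case: (mv3_spec hD hij (leq_trans hjx hxy) (leqnn y) hyi hk hy) => RS _ ES.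
      have hxy2 : x < y by rewrite ltn_neqAle hxy' hxy.
      apply: (between_contra hno RS E3 ES (a0 := y) (b0 := j)); rewrite /region; lia.
    * move/colD0 => hk.
      case: (mv3_spec hD hij hjx (leqnn x) (leq_ltn_trans hxy hyi) hx hk) => RS _ ES.
      have hxy2 : x < y by rewrite ltn_neqAle hxy' hxy.
      apply: (between_contra hno RS E3 ES (a0 := i) (b0 := x)); rewrite /region; lia.
- exfalso; apply: hno; exists M; split.
  + by apply/rookE.
  + apply: ltR_of => //; apply/eqP => e; move: hcard CM; rewrite e; lia.
  + have [hl hn] := region_lt EM h2 h3 hji; exact: ltR_of.
Qed.

Lemma dir2 n (D T : {set 'I_n * 'I_n}) : rookP D -> Nplus D T -> Lplus D T.
Proof.
move=> hD [i [j [x [y [hij [[hyi [hxy hjx]] [hrow hcol] C3 C4 C5] ->]]]]].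
move/rowD0: hrow => hx; move/colD0: hcol => hy.
have hD' := hD; case: hD' => HD1 HD2 HD3.
have hji : j < i by exact: HD1 _ hij.
case: (mv3_spec hD hij hjx hxy hyi hx hy) => R3 C3' E3.
have [hl3 hn3] := region_lt E3 ltac:(lia) ltac:(lia) hji.
split.
- by apply/rookE.
- exact: ltR_of.
- by rewrite C3'.
move=> [S [/rookE hS /ltR_inv [hTS hTneS] /ltR_inv [hSD hSneD]]].
have [[k l] [hkl hlt]] := exists_rook hS hD hSD hSneD; simpl in hlt.
have hlk : l < k by exact: HD1 _ hkl.
have hkn : k < n := ltn_ord k.
have hr : region x y i j k l.
  apply: contraT => hr; have := E3 k l hlk; rewrite (negbTE hr) addn0 => e.
  have := hTS k l ltac:(by rewrite hlk ltn_ord); rewrite -e => h; move: hlt; by rewrite ltnNge h.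
move: (hr); rewrite /region => /andP[hr1 hr2].
have ekl := rect_only C4 hkl hr1 hr2.
case: ekl => ek el; rewrite ek el in hlt.
have hin : i < n := ltn_ord i.
case: (lift hD hS hSD hij hlt) => [[x' [y' [/andP[hjx' hxy'] hyi' hx' hy' hleM]]]|[M [x' [y' [RM CM LM EM [h1 h2 h3 h4 hk]]]]]].
- case: (mv3_spec hD hij hjx' hxy' hyi' hx' hy') => RM _ EM.
  have rl := reg_le hTS hleM E3 EM.
  have t1 := rl x j ltac:(by rewrite hjx ltn_ord); have t2 := rl i y ltac:(by rewrite hyi ltn_ord).
  rewrite /region in t1 t2.
  have hxx : x <= x' by clear - t1 hjx hxy hyi hjx' hxy' hyi'; lia.
  have hyy : y' <= y by clear - t2 hjx hxy hyi hjx' hxy' hyi'; lia.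
  have ex : x' = x :> nat.
    case: (ltngtP x x') => // h; [|clear - h hxx; lia].
    exfalso; case: (ltngtP x' y) => h'.
    + have := C3 x'; rewrite h h' => /(_ isT) [/negP H _]; apply: H; apply/eqP/rowD0 => //.
    + clear - h' hxy' hyy; lia.
    + have hxy2 : x != y.
        apply/eqP => e; have e2 : nat_of_ord x = y by rewrite e.
        by clear - e2 h h'; lia.
      have := C5 hxy2; case=> /negP H _; apply: H; apply/eqP/rowD0.
      by move=> p hp; rewrite -h'; exact: hx' p hp.
  have ey : y' = y :> nat.
    case: (ltngtP y' y) => // h; [|clear - h hyy; lia].
    exfalso; case: (ltngtP x y') => h'.
    + have := C3 y'; rewrite h h' => /(_ isT) [_ /negP H]; apply: H; apply/eqP/colD0 => //.
    + clear - h' hxx hxy'; lia.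
    + have hxy2 : x != y.
        apply/eqP => e; have e2 : nat_of_ord x = y by rewrite e.
        by clear - e2 h h'; lia.
      have := C5 hxy2; case=> _ /negP H; apply: H; apply/eqP/colD0.
      by move=> p hp; rewrite h'; exact: hy' p hp.
  have ex' : x' = x by apply: val_inj.
  have ey' : y' = y by apply: val_inj.
  rewrite ex' ey' in hleM.
  move/eqP: hTneS; apply; apply: LE_antisym => //.
- have rl := reg_le hTS LM E3 EM.
  have t1 := rl x j ltac:(by rewrite hjx ltn_ord); have t2 := rl i y ltac:(by rewrite hyi ltn_ord).
  rewrite /region in t1 t2.
  have hxx : x <= x' by clear - t1 hjx hxy hyi h1 h2 h3 h4; lia.
  have hyy : y' <= y by clear - t2 hjx hxy hyi h1 h2 h3 h4; lia.
  case: hk => [e|[e|[k' [l' [hkl' ek' el' hrng]]]]].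
    by exfalso; clear - e hxx hjx; lia.
    by exfalso; clear - e hyy hyi; lia.
  have ek2 : nat_of_ord k' = x' := ek'.
  have el2 : nat_of_ord l' = y' := el'.
  have nx : (k' : nat) != x by apply/eqP; exact: hx _ hkl'.
  have ny : (l' : nat) != y by apply/eqP; exact: hy _ hkl'.
  have hk1 : x < k' <= i by clear - ek2 hxx nx hrng; flia.
  have hl1 : j <= l' < y by clear - el2 hyy ny hrng; flia.
  have := rect_only C4 hkl' hk1 hl1; case=> e1 _; move: hrng; rewrite e1 => /andP[_ /andP[_]].
  by rewrite ltnn.
Qed.

Theorem lemma3p10 (n : nat) (D : {set 'I_n * 'I_n}) :
  rook D -> forall T : {set 'I_n * 'I_n}, Lplus D T <-> Nplus D T.
Proof.
move=> /rookE hD T; split; [exact: dir1 | exact: dir2].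
Qed.
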